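(* Let $(D,H,P)$ be a market, and let $(\iota,\kappa)$ be an interview arrangement that is adequate at $P$. Let $\kappa'=(\kappa'_d)_{d\in D}$ be doctor interview capacities such that $\kappa'_d\ge \kappa_d$ for every $d\in D$. Let $\mu$ be the $(\iota,\kappa)$-matching and $\mu'$ the $(\iota,\kappa')$-matching at $P$. Then no doctor prefers $\mu'$ to $\mu$; that is, for every $d\in D$, $\mu(d)\mathrel{R_d}\mu'(d)$ (where $R_d$ is the weak relation associated with $P_d$).
   Context: A market is a triple $(D,H,P)$ where $D$ (doctors) and $H$ (hospitals) are finite sets with $|D|\ge 2$, $|H|\ge 2$; each $h\in H$ has a strict preference $P_h$ over $D\cup\{h\}$ and each $d\in D$ has a strict preference $P_d$ over $H\cup\{d\}$ (being matched to oneself means being unmatched; a partner ranked below oneself is unacceptable). A matching is $\mu:H\cup D\to H\cup D$ with $\mu(h)\in D\cup\{h\}$, $\mu(d)\in H\cup\{d\}$, and $\mu(d)=h$ iff $\mu(h)=d$. A pair $(d,h)$ blocks $\mu$ if $h\mathrel{P_d}\mu(d)$ and $d\mathrel{P_h}\mu(h)$; $\mu$ is stable if it has no blocking pair. An interview arrangement is $(\iota,\kappa)$ with $\iota_h\in\mathbb N$ the interview capacity of each $h\in H$ and $\kappa_d\in\mathbb N$ that of each $d\in D$. An interview matching is a many-to-many matching $\nu$ ($\nu(d)\subseteq H$, $\nu(h)\subseteq D$, $h\in\nu(d)$ iff $d\in\nu(h)$) with $|\nu(d)|\le\kappa_d$ and $|\nu(h)|\le\iota_h$. The $(\iota,\kappa)$-matching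 at $P$ is obtained in two steps. Step 1: $\nu$ is the hospital-optimal pairwise stable interview matching, computed by hospital-proposing deferred acceptance in which each agent's choice function from a set of proposals selects its acceptable partners in that set if there are at most its capacity of them, and otherwise its capacity-many best ones according to its preference (responsive, acceptant choice). Step 2: the final matching is the outcome of doctor-proposing deferred acceptance with each agent's preference restricted to $\nu$ (each agent $i$ ranks only the agents in $\nu(i)$, in the order given by $P_i$ and only if acceptable to $i$; all others are unacceptable). $(\iota,\kappa)$ is adequate at $P$ if the $(\iota,\kappa)$-matching at $P$ is stable with respect to the true preferences $P$. *)

(* Defs.v *)
From mathcomp Require Import all_boot.
Set Implicit Arguments. Unset Strict Implicit. Unset Printing Implicit Defensive.

(* Preferences are encoded by rank functions: for an agent [i] whose potential
   partners live in [Y], [rk i : option Y -> nat] ranks every potential partner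
   ([Some y]) and "being unmatched" ([None], i.e. matched to oneself).
   Smaller rank = more preferred.  A strict preference is an injective rank
   function.  [y] is acceptable to [i] iff [rk i (Some y) < rk i None]. *)

Section DA.
Variables (X Y : finType).
Variables (capX : X -> nat) (rkX : X -> option Y -> nat).
Variables (capY : Y -> nat) (rkY : Y -> option X -> nat).

(* Responsive, acceptant choice: from a set S of offers, keep the acceptable
   ones that have fewer than [cap] acceptable offers in S strictly better;
   i.e. all acceptable ones if at most [cap], else the [cap] best. *)
Definition choice (Z : finType) (cap : nat) (rk : option Z -> nat)
  (S : {set Z}) : {set Z} :=
  [set z in S | (rk (Some z) < rk None) &&
     (#|[set z' in S | (rk (Some z') < rk None) && (rk (Some z') < rk (Some z))]| < cap)].

(* Given the set R of pairs (x,y) in which y has rejected x, the proposals. *)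
Definition da_proposals (R : {set X * Y}) : {set X * Y} :=
  [set p | p.2 \in choice (capX p.1) (rkX p.1) [set y | (p.1, y) \notin R]].

Definition da_held (R : {set X * Y}) : {set X * Y} :=
  [set p in da_proposals R |
     p.1 \in choice (capY p.2) (rkY p.2) [set x | (x, p.2) \in da_proposals R]].

Definition da_step (R : {set X * Y}) : {set X * Y} :=
  R :|: (da_proposals R :\: da_held R).

(* Each non-stationary round adds a new rejected pair, so after #|X * Y|
   rounds the process has terminated; the outcome is the held proposals. *)
Definition da_rejections : {set X * Y} := iter #|[set: X * Y]| da_step set0.

Definition deferred_acceptance : {set X * Y} := da_held da_rejections.
End DA.

Section Market.
Variables (D H : finType).
Variables (PH : H -> option D -> nat) (PD : D -> option H -> nat).

(* Step 1: hospital-proposing DA for interviews; nu contains pairs (h, d). *)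
Definition interview_matching (iota : H -> nat) (kappa : D -> nat) : {set H * D} :=
  deferred_acceptance iota PH kappa PD.

(* Preferences restricted to the interview matching: partners outside nu
   become unacceptable (ranked below the outside option, keeping strictness). *)
Definition restrictD (nu : {set H * D}) (d : D) (o : option H) : nat :=
  match o with
  | Some h => if (h, d) \in nu then PD d (Some h) else PD d None + 1 + PD d (Some h)
  | None => PD d None
  end.

Definition restrictH (nu : {set H * D}) (h : H) (o : option D) : nat :=
  match o with
  | Some d => if (h, d) \in nu then PH h (Some d) else PH h None + 1 + PH h (Some d)
  | None => PH h None
  end.

(* Step 2: doctor-proposing (one-to-one) DA with restricted preferences.
   Result: set of matched pairs (d, h). *)
Definition iota_kappa_matching (iota : H -> nat) (kappa : D -> nat) : {set D * H} :=
  let nu := interview_matching iota kappa in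
  deferred_acceptance (fun _ => 1%N) (restrictD nu) (fun _ => 1%N) (restrictH nu).

Definition partnerD (mu : {set D * H}) (d : D) : option H := [pick h | (d, h) \in mu].
Definition partnerH (mu : {set D * H}) (h : H) : option D := [pick d | (d, h) \in mu].

Definition is_matching (mu : {set D * H}) : Prop :=
  (forall d h h', (d, h) \in mu -> (d, h') \in mu -> h = h') /\
  (forall h d d', (d, h) \in mu -> (d', h) \in mu -> d = d').

Definition blocks (mu : {set D * H}) (d : D) (h : H) : bool :=
  (PD d (Some h) < PD d (partnerD mu d)) && (PH h (Some d) < PH h (partnerH mu h)).

Definition stable (mu : {set D * H}) : Prop :=
  is_matching mu /\ forall d h, ~~ blocks mu d h.

Definition adequate (iota : H -> nat) (kappa : D -> nat) : Prop :=
  stable (iota_kappa_matching iota kappa).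
End Market.

(* Main.v *)
Require Import Defs.
From mathcomp Require Import all_boot.
Set Implicit Arguments. Unset Strict Implicit. Unset Printing Implicit Defensive.

Section ChoiceLemmas.
Variables (Z : finType) (cap : nat) (rk : option Z -> nat).
Definition accb (z : Z) := rk (Some z) < rk None.

Lemma in_choice (S : {set Z}) z : (z \in choice cap rk S) =
  [&& z \in S, accb z & #|[set z' in S | accb z' && (rk (Some z') < rk (Some z))]| < cap].
Proof. by rewrite inE. Qed.

Lemma choice_sub (S : {set Z}) : choice cap rk S \subset S.
Proof. by apply/subsetP => z; rewrite in_choice => /and3P[]. Qed.

Lemma choice_acc (S : {set Z}) z : z \in choice cap rk S -> accb z.
Proof. by rewrite in_choice => /and3P[]. Qed.

Lemma choice_mono (S S' : {set Z}) z : z \in choice cap rk S -> S' \subset S -> z \in S' ->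
  z \in choice cap rk S'.
Proof.
rewrite !in_choice => /and3P[_ -> H] sub ->; rewrite /=.
apply: leq_ltn_trans H; apply: subset_leq_card; apply/subsetP => w.
by rewrite !inE => /andP[/(subsetP sub) -> ->].
Qed.

Lemma L_top (S : {set Z}) z : z \in S -> accb z -> z \notin choice cap rk S ->
  cap <= #|[set w in choice cap rk S | rk (Some w) < rk (Some z)]|.
Proof.
suff: forall k z, rk (Some z) < k -> z \in S -> accb z -> z \notin choice cap rk S ->
  cap <= #|[set w in choice cap rk S | rk (Some w) < rk (Some z)]|.
  by move=> /(_ (rk (Some z)).+1 z (ltnSn _)).
elim=> [//|k IH] {}z Hk zS az.
rewrite in_choice zS az /= -leqNgt => H.
case: (boolP ([set z' in S | accb z' && (rk (Some z') < rk (Some z))]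
          \subset choice cap rk S)) => sub.
- apply: leq_trans H _; apply: subset_leq_card; apply/subsetP => w.
  move=> wi; rewrite in_set (subsetP sub _ wi) /=; move: wi.
  by rewrite !inE => /and3P[_ _ ->].
- have [w wi wnc] := subsetPn sub.
  move: (wi); rewrite !inE => /and3P[wS aw lt].
  have H2 := IH w (leq_trans lt Hk) wS aw wnc.
  apply: leq_trans H2 _; apply: subset_leq_card; apply/subsetP => v.
  rewrite in_set => /andP[vc lv]; rewrite in_set vc /=; exact: ltn_trans lv lt.
Qed.

Lemma GT (S : {set Z}) t : cap <= #|[set z in S | accb z && (rk (Some z) < t)]| ->
  cap <= #|[set z in choice cap rk S | rk (Some z) < t]|.
Proof.
move=> H.
case: (boolP ([set z in S | accb z && (rk (Some z) < t)] \subset choice cap rk S)) => sub.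
- apply: leq_trans H _; apply: subset_leq_card; apply/subsetP => w wi.
  rewrite in_set (subsetP sub _ wi) /=; move: wi; by rewrite !inE => /and3P[_ _ ->].
- have [w wi wnc] := subsetPn sub.
  move: (wi); rewrite !inE => /and3P[wS aw lt].
  apply: leq_trans (L_top wS aw wnc) _; apply: subset_leq_card; apply/subsetP => v.
  rewrite in_set => /andP[vc lv]; rewrite in_set vc /=; exact: ltn_trans lv lt.
Qed.
End ChoiceLemmas.


Section DAL.
Variables (X Y : finType).
Variables (capX : X -> nat) (rkX : X -> option Y -> nat).
Variables (capY : Y -> nat) (rkY : Y -> option X -> nat).

Local Notation props := (da_proposals capX rkX).
Local Notation held := (da_held capX rkX capY rkY).
Local Notation step := (da_step capX rkX capY rkY).
Definition Rn n := iter n step set0.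
Local Notation Rs := (da_rejections capX rkX capY rkY).
Local Notation M := (deferred_acceptance capX rkX capY rkY).
Definition Aset x (R : {set X * Y}) := [set y | (x, y) \notin R].
Definition Pset y (R : {set X * Y}) := [set x | (x, y) \in props R].

Lemma in_Aset x (R : {set X * Y}) y : (y \in Aset x R) = ((x, y) \notin R).
Proof. by rewrite /Aset in_set. Qed.
Lemma in_Pset y (R : {set X * Y}) x : (x \in Pset y R) = ((x, y) \in props R).
Proof. by rewrite /Pset in_set. Qed.

Lemma in_props (R : {set X * Y}) x y : ((x, y) \in props R) = (y \in choice (capX x) (rkX x) (Aset x R)).
Proof. by rewrite /da_proposals in_set. Qed.

Lemma in_held (R : {set X * Y}) x y : ((x, y) \in held R) =
  ((x, y) \in props R) && (x \in choice (capY y) (rkY y) (Pset y R)).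
Proof. by rewrite /da_held in_set. Qed.

Lemma in_step (R : {set X * Y}) p : (p \in step R) = (p \in R) || ((p \in props R) && (p \notin held R)).
Proof. by rewrite /da_step in_setU in_setD andbC. Qed.
Lemma M_held : M = held Rs.
Proof. by []. Qed.

Opaque da_step da_held da_proposals deferred_acceptance da_rejections choice.

Lemma props_notR (R : {set X * Y}) x y : (x, y) \in props R -> (x, y) \notin R.
Proof. by rewrite in_props => /(subsetP (choice_sub _ _ _)); rewrite in_Aset. Qed.

Lemma held_props (R : {set X * Y}) p : p \in held R -> p \in props R.
Proof. by case: p => x y; rewrite in_held => /andP[]. Qed.

Lemma step_sub (R : {set X * Y}) : R \subset step R.
Proof. by apply/subsetP => p pR; rewrite in_step pR. Qed.

Lemma Rn_mono n m : n <= m -> Rn n \subset Rn m.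
Proof.
move/subnK <-; elim: (m - n) => [|k IH]; first by rewrite add0n.
apply: subset_trans IH _; rewrite addSn /Rn iterS; exact: step_sub.
Qed.

Lemma RsE : Rs = Rn #|[set: X * Y]|.
Proof. by []. Qed.

Lemma stab n : Rn n.+1 = Rn n -> forall m, n <= m -> Rn m = Rn n.
Proof.
move=> E m /subnK <-; elim: (m - n) => [|k IH]; first by rewrite add0n.
by rewrite addSn /Rn iterS -/(Rn (k + n)) IH; exact: E.
Qed.

Lemma grow n : (forall k, k < n -> Rn k.+1 != Rn k) -> n <= #|Rn n|.
Proof.
elim: n => [//|n IH] H.
have H1 := IH (fun k lt => H k (ltnW lt)).
have pr : Rn n \proper Rn n.+1.
  by rewrite properEneq eq_sym H // /Rn iterS step_sub.
by apply: leq_ltn_trans H1 (proper_card pr).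
Qed.

Lemma fixpoint : step Rs = Rs.
Proof.
rewrite RsE; set N := #|[set: X * Y]|.
case: (boolP [exists k : 'I_N.+1, Rn k.+1 == Rn k]) => [/existsP[k /eqP Ek]|].
- have kN : k <= N by rewrite -ltnS ltn_ord.
  have E1 := stab Ek kN; have E2 := stab Ek (leq_trans kN (leqnSn N)).
  change (Rn N.+1 = Rn N); by rewrite E1 E2.
- rewrite negb_exists => /forallP H.
  have : N.+1 <= #|Rn N.+1|.
    apply: grow => k lt; exact: (H (Ordinal lt)).
  move=> /leq_trans/(_ (max_card _)); rewrite /N cardsT ltnn //.
Qed.

Lemma fix_sub : props Rs :\: held Rs \subset Rs.
Proof.
apply/subsetP => p; rewrite in_setD => /andP[nh hp].
by rewrite -fixpoint in_step hp nh orbT.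
Qed.

Lemma M_props x y : ((x, y) \in M) = ((x, y) \in props Rs).
Proof.
apply/idP/idP; first exact: held_props.
move=> H; apply/negPn/negP => Hn.
have : (x, y) \in props Rs :\: held Rs by rewrite in_setD H Hn.
move/(subsetP fix_sub); exact/negP/props_notR.
Qed.

Lemma M_notRs x y : (x, y) \in M -> (x, y) \notin Rs.
Proof. by rewrite M_props => /props_notR. Qed.

Lemma M_acc x y : (x, y) \in M -> (rkX x (Some y) < rkX x None) /\ (rkY y (Some x) < rkY y None).
Proof.
move=> H; split.
- by move: H; rewrite M_props in_props => /choice_acc.
- by move: H; rewrite in_held => /andP[_ /choice_acc].
Qed.

Lemma M_choiceX x : choice (capX x) (rkX x) (Aset x Rs) = [set y | (x, y) \in M].
Proof. by apply/setP => y; rewrite [RHS]in_set M_props in_props. Qed.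

Definition Hset y (R : {set X * Y}) := [set x | (x, y) \in held R].

Lemma Hset_choice y (R : {set X * Y}) : Hset y R = choice (capY y) (rkY y) (Pset y R).
Proof.
apply/setP => x; rewrite [LHS]in_set in_held.
case: (boolP (x \in choice _ _ _)) => [H|]; last by rewrite andbF.
by move/(subsetP (choice_sub _ _ _)): H; rewrite in_set => ->.
Qed.

Lemma held_next (R : {set X * Y}) x y : (x, y) \in held R -> (x, y) \in props (step R).
Proof.
move=> H; have Hp := held_props H.
move: (Hp); rewrite !in_props => Hc; apply: choice_mono Hc _ _.
- apply/subsetP => z; rewrite !in_Aset; apply: contra => zR.
  by rewrite in_step zR.
- rewrite in_Aset in_step negb_or (props_notR Hp) /= negb_and negbK H orbT //.
Qed.

Lemma inv_recv n x y : (x, y) \in Rn n -> rkY y (Some x) < rkY y None ->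
  capY y <= #|[set x' in Hset y (Rn n) | rkY y (Some x') < rkY y (Some x)]|.
Proof.
elim: n x => [|n IH] x; first by rewrite /Rn /= inE.
rewrite /Rn iterS -/(Rn n) => H ax.
have mono : forall t, capY y <= #|[set x' in Hset y (Rn n) | rkY y (Some x') < t]| ->
    capY y <= #|[set x' in Hset y (step (Rn n)) | rkY y (Some x') < t]|.
  move=> t Ht; rewrite Hset_choice; apply: GT.
  apply: leq_trans Ht _; apply: subset_leq_card; apply/subsetP => z.
  rewrite in_set => /andP[zH zt]; rewrite in_set zt andbT.
  move: (zH); rewrite in_set => zh.
  rewrite in_set (held_next zh) /=.
  by move: zH; rewrite Hset_choice => /choice_acc.
apply: mono.
move: H; rewrite in_step => /orP[H|/andP[hp nh]]; first exact: IH.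
rewrite Hset_choice; apply: L_top => //.
  by rewrite in_set.
by move: nh; rewrite in_held hp.
Qed.

Lemma recvM x y : (x, y) \in Rs -> rkY y (Some x) < rkY y None ->
  capY y <= #|[set x' | ((x', y) \in M) && (rkY y (Some x') < rkY y (Some x))]|.
Proof.
move=> H a; have := inv_recv H a.
have E : Hset y Rs = [set x' | (x', y) \in M] by apply/setP => z; rewrite !in_set.
rewrite -RsE E => H2; apply: leq_trans H2 _; apply: subset_leq_card; apply/subsetP => z.
by rewrite !in_set.
Qed.

Lemma held_lt_Y x y : (x, y) \in M ->
  #|[set x' | ((x', y) \in M) && (rkY y (Some x') < rkY y (Some x))]| < capY y.
Proof.
move=> H; move: (H); rewrite in_held => /andP[_]; rewrite in_choice => /and3P[_ _ lt].
apply: leq_ltn_trans lt; apply: subset_leq_card; apply/subsetP => z.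
rewrite (@in_set X) => /andP[zM zlt]; rewrite (@in_set X) zlt andbT in_Pset -M_props zM /=.
exact: (M_acc zM).2.
Qed.

Lemma held_lt_X x y : (x, y) \in M ->
  #|[set y' | ((x, y') \in M) && (rkX x (Some y') < rkX x (Some y))]| < capX x.
Proof.
move=> H; move: (H); rewrite M_props in_props in_choice => /and3P[_ _ lt].
apply: leq_ltn_trans lt; apply: subset_leq_card; apply/subsetP => z.
rewrite (@in_set Y) => /andP[zM zlt]; rewrite (@in_set Y) zlt andbT in_Aset (M_notRs zM) /=.
exact: (M_acc zM).1.
Qed.

Lemma PS x y : rkX x (Some y) < rkX x None -> rkY y (Some x) < rkY y None ->
  (x, y) \notin M ->
  capX x <= #|[set y' | ((x, y') \in M) && (rkX x (Some y') < rkX x (Some y))]| \/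
  capY y <= #|[set x' | ((x', y) \in M) && (rkY y (Some x') < rkY y (Some x))]|.
Proof.
move=> ax ay nM.
case: (boolP ((x, y) \in Rs)) => HR; first by right; exact: recvM.
left.
have := @L_top _ (capX x) (rkX x) (Aset x Rs) y.
rewrite in_set HR M_choiceX => /(_ isT ax); rewrite in_set nM => /(_ isT) H.
apply: leq_trans H _; apply: subset_leq_card; apply/subsetP => z; by rewrite !in_set.
Qed.

End DAL.


Section CS.
Variables (X Y : finType).
Variables (capX : X -> nat) (rkX : X -> option Y -> nat).
Variables (capY capY' : Y -> nat) (rkY : Y -> option X -> nat).
Hypothesis caple : forall y, capY y <= capY' y.

Local Notation M := (deferred_acceptance capX rkX capY rkY).
Local Notation Rs := (da_rejections capX rkX capY rkY).
Local Notation M' := (deferred_acceptance capX rkX capY' rkY).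
Local Notation Rs' := (da_rejections capX rkX capY' rkY).
Local Notation R' := (Rn capX rkX capY' rkY).
Local Notation props' := (da_proposals capX rkX).

Definition CInv n := forall x y, (x, y) \in R' n ->
  ((x, y) \in Rs) || ~~ (rkY y (Some x) < rkY y None).

Lemma E_lem n x y : CInv n -> (x, y) \in props' (R' n) -> (x, y) \notin Rs ->
  (x, y) \in M.
Proof.
move=> IH Hp nR.
have Hc : y \in choice (capX x) (rkX x) (Aset x (R' n)) by rewrite -in_props.
have yA : y \in Aset x Rs by rewrite in_Aset.
case: (boolP (y \in choice (capX x) (rkX x) (Aset x Rs))) => [|nc].
  by rewrite M_choiceX in_set.
have ay := choice_acc Hc.
have := L_top yA ay nc.
move: Hc; rewrite in_choice => /and3P[_ _ lt] H.
have: capX x < capX x.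
  apply: leq_trans lt; apply: leq_trans H _; apply: subset_leq_card.
  apply/subsetP => w; rewrite (@in_set Y) => /andP[wc wl].
  rewrite (@in_set Y) wl andbT (choice_acc wc) andbT in_Aset.
  move: wc; rewrite M_choiceX in_set => wM.
  have := IH x w; case: ((x, w) \in R' n) => //.
  by move/(_ isT); rewrite (negbTE (M_notRs wM)) /= (M_acc wM).2.
by rewrite ltnn.
Qed.

Lemma CInv_all n : CInv n.
Proof.
elim: n => [|n IH] x y; first by rewrite /Rn /= inE.
rewrite /Rn iterS -/(Rn _ _ _ _ n) in_step => /orP[H|/andP[hp nh]].
  exact: IH.
case: (boolP (rkY y (Some x) < rkY y None)) => ax; last by rewrite orbT.
rewrite orbF; apply/negPn/negP => nR.
have xM := E_lem IH hp nR.
move: nh; rewrite in_held hp /= in_choice in_Pset hp /=.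
have ax' : accb (rkY y) x by [].
rewrite ax' /= -leqNgt => H.
have := held_lt_Y xM.
rewrite ltnNge; move/negP; apply.
apply: leq_trans (caple y) _; apply: leq_trans H _; apply: subset_leq_card.
apply/subsetP => z; rewrite (@in_set X) => /andP[zP /andP[az zl]].
rewrite (@in_set X) zl andbT.
rewrite in_Pset in zP.
case: (boolP ((z, y) \in Rs)) => zR; last exact: E_lem IH zP zR.
have := recvM zR az.
have := held_lt_Y xM.
move=> lt1 le1; have: capY y < capY y.
  apply: leq_ltn_trans lt1; apply: leq_trans le1 _; apply: subset_leq_card.
  apply/subsetP => w; rewrite (@in_set X) => /andP[wM wl].
  by rewrite (@in_set X) wM (ltn_trans wl zl).
by rewrite ltnn.
Qed.

Lemma CS x y : (x, y) \in M -> (x, y) \notin M' ->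
  capX x <= #|[set y' | ((x, y') \in M') && (rkX x (Some y') < rkX x (Some y))]|.
Proof.
move=> xM nM'.
have nR : (x, y) \notin Rs'.
  apply/negP => H; have := CInv_all H.
  by rewrite (negbTE (M_notRs xM)) /= (M_acc xM).2.
have yA : y \in Aset x Rs' by rewrite in_Aset.
have nc : y \notin choice (capX x) (rkX x) (Aset x Rs') by rewrite M_choiceX in_set.
have := L_top yA (M_acc xM).1 nc.
rewrite M_choiceX => H; apply: leq_trans H _; apply: subset_leq_card.
by apply/subsetP => w; rewrite !(@in_set Y).
Qed.
End CS.


Lemma card_lt1 (T : finType) (P : pred T) z : #|[set x | P x]| < 1 -> ~~ P z.
Proof.
rewrite ltnS leqn0 cards_eq0 => /eqP E; apply/negP => Pz.
have : z \in [set x | P x] by rewrite in_set.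
by rewrite E in_set0.
Qed.

Lemma card_ge1 (T : finType) (P : pred T) : 1 <= #|[set x | P x]| -> exists z, P z.
Proof. by move/card_gt0P => [z]; rewrite in_set => Pz; exists z. Qed.

Section Market.
Variables (D H : finType) (PH : H -> option D -> nat) (PD : D -> option H -> nat).
Hypothesis strictH : forall h, injective (PH h).
Hypothesis strictD : forall d, injective (PD d).
Variable iota : H -> nat.

Definition nuK k := deferred_acceptance iota PH k PD.
Definition rDK k := restrictD PD (nuK k).
Definition rHK k := restrictH PH (nuK k).
Definition muK k := deferred_acceptance (fun _ : D => 1) (rDK k) (fun _ : H => 1) (rHK k).

Lemma muK_E k : iota_kappa_matching PH PD iota k = muK k.
Proof. by []. Qed.

Lemma nu_acc k h d : (h, d) \in nuK k -> PH h (Some d) < PH h None /\ PD d (Some h) < PD d None.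
Proof. exact: M_acc. Qed.

Lemma rD_in k h d : (h, d) \in nuK k -> rDK k d (Some h) = PD d (Some h).
Proof. by rewrite /rDK /restrictD => ->. Qed.
Lemma rH_in k h d : (h, d) \in nuK k -> rHK k h (Some d) = PH h (Some d).
Proof. by rewrite /rHK /restrictH => ->. Qed.

Lemma rD_acc k h d : rDK k d (Some h) < rDK k d None -> (h, d) \in nuK k.
Proof.
rewrite /rDK /restrictD; case: ((h, d) \in nuK k) => //.
by rewrite -addnA ltnNge leq_addr.
Qed.
Lemma rH_acc k h d : rHK k h (Some d) < rHK k h None -> (h, d) \in nuK k.
Proof.
rewrite /rHK /restrictH; case: ((h, d) \in nuK k) => //.
by rewrite -addnA ltnNge leq_addr.
Qed.

Lemma rD_acc_in k h d : (h, d) \in nuK k -> rDK k d (Some h) < rDK k d None.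
Proof. by move=> H1; rewrite rD_in //; exact: (nu_acc H1).2. Qed.
Lemma rH_acc_in k h d : (h, d) \in nuK k -> rHK k h (Some d) < rHK k h None.
Proof. by move=> H1; rewrite rH_in //; exact: (nu_acc H1).1. Qed.

Lemma mu_sub k d h : (d, h) \in muK k -> (h, d) \in nuK k.
Proof. by move/M_acc => [/rD_acc]. Qed.

Lemma mu_matching k : is_matching (muK k).
Proof.
split.
- move=> d h h' H1 H2.
  have n1 := mu_sub H1; have n2 := mu_sub H2.
  have a := card_lt1 h' (held_lt_X H1); have b := card_lt1 h (held_lt_X H2).
  rewrite H2 /= -leqNgt in a; rewrite H1 /= -leqNgt in b.
  have e : rDK k d (Some h) = rDK k d (Some h') by apply/eqP; rewrite eqn_leq a b.
  rewrite (rD_in n1) (rD_in n2) in e.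
  by case: (strictD e).
- move=> h d d' H1 H2.
  have n1 := mu_sub H1; have n2 := mu_sub H2.
  have a := card_lt1 d' (held_lt_Y H1); have b := card_lt1 d (held_lt_Y H2).
  rewrite H2 /= -leqNgt in a; rewrite H1 /= -leqNgt in b.
  have e : rHK k h (Some d) = rHK k h (Some d') by apply/eqP; rewrite eqn_leq a b.
  rewrite (rH_in n1) (rH_in n2) in e.
  by case: (strictH e).
Qed.

Lemma pD_some (m : {set D * H}) d h : is_matching m -> (d, h) \in m -> partnerD m d = Some h.
Proof.
move=> [M1 _] H1; rewrite /partnerD; case: pickP => [h' H2|/(_ h)]; last by rewrite H1.
by rewrite (M1 _ _ _ H1 H2).
Qed.
Lemma pH_some (m : {set D * H}) d h : is_matching m -> (d, h) \in m -> partnerH m h = Some d.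
Proof.
move=> [_ M2] H1; rewrite /partnerH; case: pickP => [d' H2|/(_ d)]; last by rewrite H1.
by rewrite (M2 _ _ _ H1 H2).
Qed.
Lemma pD_in (m : {set D * H}) d h : partnerD m d = Some h -> (d, h) \in m.
Proof. by rewrite /partnerD; case: pickP => // h' H1 [<-]. Qed.
Lemma pH_in (m : {set D * H}) d h : partnerH m h = Some d -> (d, h) \in m.
Proof. by rewrite /partnerH; case: pickP => // d' H1 [<-]. Qed.

Lemma PSmu k h d d2 : (h, d2) \in nuK k -> (d, h) \in muK k ->
  PH h (Some d2) < PH h (Some d) ->
  exists g, (d2, g) \in muK k /\ PD d2 (Some g) < PD d2 (Some h).
Proof.
move=> n2 m1 lt.
have nm : (d2, h) \notin muK k.
  apply/negP => m2; have := (mu_matching k).2 _ _ _ m1 m2 => E.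
  by rewrite E ltnn in lt.
case: (PS (rD_acc_in n2) (rH_acc_in n2) nm) => /card_ge1 [z /andP[zM zl]].
- exists z; split => //.
  by rewrite (rD_in (mu_sub zM)) (rD_in n2) in zl.
- have E := (mu_matching k).2 _ _ _ m1 zM; subst z.
  rewrite (rH_in (mu_sub m1)) (rH_in n2) in zl.
  by have := ltn_trans lt zl; rewrite ltnn.
Qed.

Variables (kappa kappa' : D -> nat).
Hypothesis kle : forall d, kappa d <= kappa' d.

Lemma NotBoth h e d : (h, e) \in nuK kappa -> (h, d) \in nuK kappa' ->
  PH h (Some e) < PH h (Some d) -> (h, e) \in nuK kappa'.
Proof.
move=> ne nd lt; apply/negPn/negP => nn.
have := CS kle ne nn; have := held_lt_X nd.
move=> a b; have: iota h < iota h.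
  apply: leq_trans a; apply: leq_trans b _; apply: subset_leq_card.
  apply/subsetP => z; rewrite (@in_set D) => /andP[zM zl].
  by rewrite (@in_set D) zM (ltn_trans zl lt).
by rewrite ltnn.
Qed.

End Market.


Section Main.
Variables (D H : finType) (PH : H -> option D -> nat) (PD : D -> option H -> nat).
Hypothesis strictH : forall h, injective (PH h).
Hypothesis strictD : forall d, injective (PD d).
Variables (iota : H -> nat) (kappa kappa' : D -> nat).
Hypothesis kle : forall d, kappa d <= kappa' d.
Variables (nu nu' : {set H * D}) (mu mu' : {set D * H}).
Hypothesis Enu : nu = nuK PH PD iota kappa.
Hypothesis Enu' : nu' = nuK PH PD iota kappa'.
Hypothesis Emu : mu = muK PH PD iota kappa.
Hypothesis Emu' : mu' = muK PH PD iota kappa'.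
Hypothesis adeq : stable PH PD mu.

Local Notation rD := (rDK PH PD iota kappa).
Local Notation rH := (rHK PH PD iota kappa).
Local Notation Rm := (Rn (fun _ : D => 1) rD (fun _ : H => 1) rH).
Local Notation Rsm := (da_rejections (fun _ : D => 1) rD (fun _ : H => 1) rH).

Lemma matchmu : is_matching mu.
Proof. rewrite Emu; exact: mu_matching. Qed.
Lemma matchmu' : is_matching mu'.
Proof. rewrite Emu'; exact: mu_matching. Qed.
Lemma Wmusub d h : (d, h) \in mu -> (h, d) \in nu.
Proof. rewrite Emu Enu; exact: mu_sub. Qed.
Lemma Wmusub' d h : (d, h) \in mu' -> (h, d) \in nu'.
Proof. rewrite Emu' Enu'; exact: mu_sub. Qed.
Lemma Wnuacc h d : (h, d) \in nu -> PH h (Some d) < PH h None /\ PD d (Some h) < PD d None.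
Proof. rewrite Enu; exact: nu_acc. Qed.
Lemma Wnuacc' h d : (h, d) \in nu' -> PH h (Some d) < PH h None /\ PD d (Some h) < PD d None.
Proof. rewrite Enu'; exact: nu_acc. Qed.
Lemma WNotBoth h e d : (h, e) \in nu -> (h, d) \in nu' ->
  PH h (Some e) < PH h (Some d) -> (h, e) \in nu'.
Proof. rewrite Enu Enu'; exact: NotBoth. Qed.
Lemma WPSmu' h d d2 : (h, d2) \in nu' -> (d, h) \in mu' ->
  PH h (Some d2) < PH h (Some d) ->
  exists g, (d2, g) \in mu' /\ PD d2 (Some g) < PD d2 (Some h).
Proof. rewrite Enu' Emu'; exact: PSmu. Qed.
Lemma WheldX' h d : (h, d) \in nu' ->
  #|[set e | ((h, e) \in nu') && (PH h (Some e) < PH h (Some d))]| < iota h.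
Proof. rewrite Enu'; exact: held_lt_X. Qed.
Lemma WheldY h d : (h, d) \in nu ->
  #|[set h' | ((h', d) \in nu) && (PD d (Some h') < PD d (Some h))]| < kappa d.
Proof. rewrite Enu; exact: held_lt_Y. Qed.
Lemma WPS h d : PH h (Some d) < PH h None -> PD d (Some h) < PD d None -> (h, d) \notin nu ->
  iota h <= #|[set e | ((h, e) \in nu) && (PH h (Some e) < PH h (Some d))]| \/
  kappa d <= #|[set h' | ((h', d) \in nu) && (PD d (Some h') < PD d (Some h))]|.
Proof. rewrite Enu; exact: PS. Qed.
Lemma WrD_in h d : (h, d) \in nu -> rD d (Some h) = PD d (Some h).
Proof. rewrite Enu; exact: rD_in. Qed.
Lemma WrH_in h d : (h, d) \in nu -> rH h (Some d) = PH h (Some d).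
Proof. rewrite Enu; exact: rH_in. Qed.
Lemma WrH_acc h d : rH h (Some d) < rH h None -> (h, d) \in nu.
Proof. rewrite Enu; exact: rH_acc. Qed.
Lemma WrD_acc_in h d : (h, d) \in nu -> rD d (Some h) < rD d None.
Proof. rewrite Enu; exact: rD_acc_in. Qed.
Lemma WrH_acc_in h d : (h, d) \in nu -> rH h (Some d) < rH h None.
Proof. rewrite Enu; exact: rH_acc_in. Qed.
Lemma WnotRs d h : (d, h) \in mu -> (d, h) \notin Rsm.
Proof. rewrite Emu; exact: M_notRs. Qed.
Lemma Wchoice d : choice 1 (rD d) (Aset d Rsm) = [set h | (d, h) \in mu].
Proof. rewrite Emu; exact: M_choiceX. Qed.

Definition Sset := [set d | PD d (partnerD mu' d) < PD d (partnerD mu d)].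

Lemma in_Sset d : (d \in Sset) = (PD d (partnerD mu' d) < PD d (partnerD mu d)).
Proof. by rewrite in_set. Qed.

Lemma S_mu' d : d \in Sset -> exists h, (d, h) \in mu'.
Proof.
rewrite in_Sset; case E: (partnerD mu' d) => [h|]; first by move=> _; exists h; exact: pD_in.
case E2: (partnerD mu d) => [g|]; last by rewrite ltnn.
have := (Wnuacc (Wmusub (pD_in E2))).2 => a b.
by have := ltn_trans a b; rewrite ltnn.
Qed.

Lemma S_in d h : d \in Sset -> (d, h) \in mu' -> PD d (Some h) < PD d (partnerD mu d).
Proof. by move=> dS m; move: dS; rewrite in_Sset (pD_some matchmu' m). Qed.

Lemma step_f d h : d \in Sset -> (d, h) \in mu' -> exists d2, (d2, h) \in mu /\ d2 \in Sset.
Proof.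
move=> dS m.
have lt1 := S_in dS m.
have nb := adeq.2 d h; rewrite /blocks lt1 /= -leqNgt in nb.
have n' := Wmusub' m.
have ah := (Wnuacc' n').1.
case E: (partnerH mu h) nb => [d2|]; last first.
  by move=> a; have := leq_ltn_trans a ah; rewrite ltnn.
move=> le2.
have m2 := pH_in E.
have ne : d2 != d.
  apply/eqP => e; subst d2; rewrite (pD_some matchmu m2) in lt1; by rewrite ltnn in lt1.
have lt2 : PH h (Some d2) < PH h (Some d).
  rewrite ltn_neqAle le2 andbT; apply/negP => /eqP /strictH [e]; by rewrite e eqxx in ne.
have n2 := Wmusub m2.
have n2' := WNotBoth n2 n' lt2.
have [g [mg lg]] := WPSmu' n2' m lt2.
exists d2; split => //.
by rewrite in_Sset (pD_some matchmu' mg) (pD_some matchmu m2).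
Qed.

Definition fS d := match partnerD mu' d with
  | Some h => odflt d (partnerH mu h) | None => d end.

Lemma fS_spec d : d \in Sset -> exists h, [/\ (d, h) \in mu', (fS d, h) \in mu & fS d \in Sset].
Proof.
move=> dS; have [h m] := S_mu' dS.
have [d2 [m2 s2]] := step_f dS m.
exists h; rewrite /fS (pD_some matchmu' m) (pH_some matchmu m2) /=; by split.
Qed.

Lemma S_matched d : d \in Sset -> exists g, (d, g) \in mu.
Proof.
move=> dS.
have sub : fS @: Sset \subset Sset.
  apply/subsetP => x /imsetP [y yS ->]; have [h [_ _ ?]] := fS_spec yS; done.
have inj : {in Sset &, injective fS}.
  move=> x y xS yS e.
  have [h1 [a1 b1 _]] := fS_spec xS; have [h2 [a2 b2 _]] := fS_spec yS.
  rewrite e in b1; have e2 := matchmu.1 _ _ _ b1 b2; subst h2.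
  exact: matchmu'.2 _ _ _ a1 a2.
have eqS : fS @: Sset = Sset.
  apply/eqP; rewrite eqEcard sub /= card_in_imset //.
have : d \in fS @: Sset by rewrite eqS.
move=> /imsetP [y yS ->]; have [h [_ b _]] := fS_spec yS; by exists h.
Qed.

Lemma N2 d h : d \in Sset -> (d, h) \in mu' -> (h, d) \in nu.
Proof.
move=> dS m; apply/negPn/negP => nn.
have n' := Wmusub' m.
have [g mg] := S_matched dS.
have lt1 := S_in dS m; rewrite (pD_some matchmu mg) in lt1.
have [a1 a2] := Wnuacc' n'.
case: (WPS a1 a2 nn).
- move=> c.
  have := WheldX' n'; rewrite ltnNge; move/negP; apply.
  apply: leq_trans c _; apply: subset_leq_card; apply/subsetP => e.
  rewrite (@in_set D) => /andP[eM el]; rewrite (@in_set D) el andbT.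
  exact: WNotBoth eM n' el.
- move=> c.
  have ng := Wmusub mg.
  have := WheldY ng; rewrite ltnNge; move/negP; apply.
  apply: leq_trans c _; apply: subset_leq_card; apply/subsetP => e.
  rewrite (@in_set H) => /andP[eM el]; rewrite (@in_set H) eM /=.
  exact: ltn_trans el lt1.
Qed.

Lemma Rm_sub n : n <= #|[set: D * H]| -> Rm n \subset Rsm.
Proof. by move=> le; rewrite RsE; exact: Rn_mono. Qed.

Lemma Inv2 n : n <= #|[set: D * H]| -> forall d h, d \in Sset -> (d, h) \in mu' -> (d, h) \notin Rm n.
Proof.
elim: n => [|n IH] le d h dS m; first by rewrite /Rn /= inE.
have IHn := IH (ltnW le).
rewrite /Rn iterS -/(Rn _ _ _ _ n) in_step negb_or IHn //=.
apply/negP => /andP[hp nh].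
have nd := N2 dS m.
have n' := Wmusub' m.
move: nh; rewrite in_held hp andTb in_choice in_Pset hp andTb.
have ad : accb (rH h) d by exact: WrH_acc_in nd.
rewrite ad andTb -leqNgt => /card_ge1 [d' /and3P[d'P ad' ld']].
rewrite in_Pset in d'P.
have nd' := WrH_acc ad'.
rewrite (WrH_in nd') (WrH_in nd) in ld'.
have top : forall g, (d', g) \notin Rm n -> (g, d') \in nu ->
    ~~ (PD d' (Some g) < PD d' (Some h)).
  move=> g gn gnu.
  move: d'P; rewrite in_props in_choice => /and3P[_ _ c].
  have ag : accb (rD d') g := WrD_acc_in gnu.
  have := card_lt1 g c; rewrite in_Aset gn ag andTb (WrD_in gnu) (WrD_in nd') //.
case: (boolP ((h, d') \in nu')) => nd''; last first.
  by rewrite (WNotBoth nd' n' ld') in nd''.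
have [g [mg lg]] := WPSmu' nd'' m ld'.
have d'S : d' \in Sset.
  rewrite in_Sset (pD_some matchmu' mg).
  case E: (partnerD mu d') => [g'|].
  - have mg' := pD_in E.
    have ng' := Wmusub mg'.
    have nR : (d', g') \notin Rm n.
      apply/negP => /(subsetP (Rm_sub (ltnW le))); apply/negP; exact: WnotRs.
    have := top g' nR ng'; rewrite -leqNgt => le'.
    exact: leq_trans lg le'.
  - exact: ltn_trans lg (Wnuacc nd').2.
have := top g (IHn d' g d'S mg) (N2 d'S mg).
by rewrite lg.
Qed.

Lemma S_empty d : d \notin Sset.
Proof.
apply/negP => dS.
have [h m] := S_mu' dS.
have nR : (d, h) \notin Rsm by rewrite RsE; exact: Inv2 (leqnn _) _ _ dS m.
have nd := N2 dS m.
have nM : (d, h) \notin mu.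
  apply/negP => mm; have := S_in dS m; by rewrite (pD_some matchmu mm) ltnn.
have hA : h \in Aset d Rsm by rewrite in_Aset.
have nc : h \notin choice 1 (rD d) (Aset d Rsm).
  by rewrite Wchoice in_set.
have := L_top hA (WrD_acc_in nd) nc.
move/card_ge1 => [w /andP[wc wl]].
move: wc; rewrite Wchoice in_set => mw.
rewrite (WrD_in (Wmusub mw)) (WrD_in nd) in wl.
have := S_in dS m; rewrite (pD_some matchmu mw) => l2.
by have := ltn_trans wl l2; rewrite ltnn.
Qed.

End Main.

Theorem theorem1 (D H : finType)
  (PH : H -> option D -> nat) (PD : D -> option H -> nat)
  (hD : 2 <= #|D|) (hH : 2 <= #|H|)
  (strictH : forall h, injective (PH h)) (strictD : forall d, injective (PD d))
  (iota : H -> nat) (kappa kappa' : D -> nat) :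
  adequate PH PD iota kappa ->
  (forall d, kappa d <= kappa' d) ->
  forall d,
    PD d (partnerD (iota_kappa_matching PH PD iota kappa) d)
    <= PD d (partnerD (iota_kappa_matching PH PD iota kappa') d).
Proof.
move=> adeq kle d.
rewrite !muK_E.
have := @S_empty D H PH PD strictH strictD iota kappa kappa' kle _ _ _ _
  erefl erefl erefl erefl adeq d.
by rewrite in_Sset -leqNgt.
Qed.
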